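(* Let $X$ be a complete median space of finite rank that is lineal, i.e. there exist $\xi,\eta\in\overline X$ with $X\subseteq I(\xi,\eta)$. Then every isometric action of a group on $X$ is Roller elementary.
   Context: A median space is a metric space $(X,d)$ in which for all $x,y,z$ the set $I(x,y)\cap I(y,z)\cap I(z,x)$ is a single point, where $I(x,y)=\{z:d(x,z)+d(z,y)=d(x,y)\}$; convex sets contain $I(x,y)$ whenever they contain $x,y$. A halfspace is a nonempty proper convex $\mathfrak h\subseteq X$ with convex complement; $\mathscr H$ is the set of halfspaces; rank is the maximal size of a set of pairwise transverse halfspaces. With $\sigma_x=\{\mathfrak h:x\in\mathfrak h\}$, $\mathscr H(x|y)=\sigma_y\setminus\sigma_x$ and ultrafilters the maximal sets of pairwise intersecting halfspaces, there is a canonical isometry-invariant measure $\widehat\nu$ on a $\sigma$-algebra $\widehat{\mathscr B}$ on $\mathscr H$ with $\widehat\nu(\mathscr H(x|y))=d(x,y)$. The Roller compactification $\overline X$ is the set of ultrafilters $\sigma$ with $\sigma\triangle\sigma_x\in\widehat{\mathscr B}$ modulo null symmetric difference, with median $m(\sigma_1,\sigma_2,\sigma_3)=(\sigma_1\cap\sigma_2)\cup(\sigma_2\cap\sigma_3)\cup(\sigma_3\cap\sigma_1)$; it is a compact median algebra containing $X$ (via $x\mapsto\sigma_x$) on which isometries of $X$ act. In $\overline X$, the interval is $I(\xi,\eta)=\{\zeta\in\overline X: m(\xi,\eta,\zeta)=\zeta\}$. An isometric action of $\Gamma$ on $X$ is Roller elementary if $\Gamma$ has a finite orbit in $\overline X$.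 *)

(* Defs.v *)
From HB Require Import structures.
From mathcomp Require Import all_boot all_order all_algebra.
From mathcomp Require Import all_classical all_reals.
From mathcomp Require Import ereal measure.
Set Implicit Arguments. Unset Strict Implicit. Unset Printing Implicit Defensive.
Import Order.TTheory GRing.Theory Num.Theory.
Local Open Scope classical_set_scope.
Local Open Scope ring_scope.

Section MedianDefs.
Context {R : realType} {X : Type} (d : X -> X -> R).

Definition is_metric : Prop :=
  (forall x y, d x y = 0 <-> x = y) /\
  (forall x y, d x y = d y x) /\
  (forall x y z, d x z <= d x y + d y z).

Definition complete_metric : Prop :=
  forall u : nat -> X,
    (forall e : R, 0 < e -> exists N, forall m n, (N <= m)%N -> (N <= n)%N -> d (u m) (u n) < e) ->
    exists l, forall e : R, 0 < e -> exists N, forall n, (N <= n)%N -> d (u n) l < e.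

Definition mI (x y : X) : set X := [set z | d x z + d z y = d x y].

Definition is_median_space : Prop :=
  is_metric /\
  forall x y z, exists! m, mI x y m /\ mI y z m /\ mI z x m.

Definition convex (C : set X) : Prop :=
  forall x y, C x -> C y -> mI x y `<=` C.

Definition halfspace (h : set X) : Prop :=
  h !=set0 /\ h != setT /\ convex h /\ convex (~` h).

Definition transverse (h k : set X) : Prop :=
  (h `&` k) !=set0 /\ (h `&` ~` k) !=set0 /\ (~` h `&` k) !=set0 /\ (~` h `&` ~` k) !=set0.

Definition finite_rank : Prop :=
  exists n : nat, forall (m : nat) (f : 'I_m -> set X),
    (forall i, halfspace (f i)) ->
    (forall i j, i != j -> transverse (f i) (f j)) -> (m <= n)%N.

Definition Hs : set (set X) := halfspace.
Definition sigma_pt (x : X) : set (set X) := [set h | halfspace h /\ h x].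
Definition Hxy (x y : X) : set (set X) := sigma_pt y `\` sigma_pt x.

Definition pairwise_intersecting (s : set (set X)) : Prop :=
  s `<=` Hs /\ forall h k, s h -> s k -> (h `&` k) !=set0.
Definition ultrafilter (s : set (set X)) : Prop :=
  pairwise_intersecting s /\
  forall t, pairwise_intersecting t -> s `<=` t -> t = s.

Definition Hgen : set (set (set X)) := [set E | exists x y, E = Hxy x y].

Definition HB := g_sigma_algebraType Hgen.

Definition isometry (phi : X -> X) : Prop :=
  bijective phi /\ forall x y, d (phi x) (phi y) = d x y.

Definition image_hs (phi : X -> X) (E : set (set X)) : set (set X) :=
  [set phi @` h | h in E].

Definition canonical_measure (nu : {measure set HB -> \bar R}) : Prop :=
  (forall x y, nu (Hxy x y : set HB) = (d x y)%:E) /\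
  (forall phi, isometry phi -> forall E : set HB, measurable E ->
     nu (image_hs phi E : set HB) = nu E).

(** the extended sigma-algebra B^ and nu^-null sets:
    E in B^ iff E ∩ H(x|y) in B for all x,y;
    nu^(E) = sup over finite F ⊆ X of nu(E ∩ ⋃_{x,y∈F} H(x|y)),
    so E is nu^-null iff nu(E ∩ H(x|y)) = 0 for all x, y. *)
Definition Bhat (E : set (set X)) : Prop :=
  forall x y, measurable (E `&` Hxy x y : set HB).
Definition nuhat_null (nu : {measure set HB -> \bar R}) (E : set (set X)) : Prop :=
  forall x y, nu (E `&` Hxy x y : set HB) = 0%E.

Definition symdiff (A B : set (set X)) : set (set X) := (A `\` B) `|` (B `\` A).

(** points of the Roller compactification (representatives) *)
Definition roller_point (s : set (set X)) : Prop :=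
  ultrafilter s /\ exists x, Bhat (symdiff s (sigma_pt x)).

Definition roller_eq (nu : {measure set HB -> \bar R}) (s t : set (set X)) : Prop :=
  nuhat_null nu (symdiff s t).

Definition median3 (s1 s2 s3 : set (set X)) : set (set X) :=
  (s1 `&` s2) `|` (s2 `&` s3) `|` (s3 `&` s1).

Definition roller_interval (nu : {measure set HB -> \bar R}) (xi eta zeta : set (set X)) : Prop :=
  roller_point zeta /\ roller_eq nu (median3 xi eta zeta) zeta.

Definition lineal (nu : {measure set HB -> \bar R}) : Prop :=
  exists xi eta, roller_point xi /\ roller_point eta /\
    forall x, roller_interval nu xi eta (sigma_pt x).

(** Roller elementary: some point of the Roller compactification has a finite
    orbit, i.e. its orbit meets only finitely many classes *)
Definition roller_elementary (nu : {measure set HB -> \bar R})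
  {G : Type} (act : G -> X -> X) : Prop :=
  exists s, roller_point s /\
    exists l : seq (set (set X)), forall g, exists2 t, t \in l & roller_eq nu (image_hs (act g) s) t.

End MedianDefs.

Definition is_group {G : Type} (mul : G -> G -> G) (e : G) (inv : G -> G) : Prop :=
  (forall a b c, mul a (mul b c) = mul (mul a b) c) /\
  (forall a, mul e a = a) /\ (forall a, mul (inv a) a = e).

Definition isometric_action {R : realType} {X G : Type} (d : X -> X -> R)
  (mul : G -> G -> G) (e : G) (act : G -> X -> X) : Prop :=
  (forall x, act e x = x) /\
  (forall g h x, act (mul g h) x = act g (act h x)) /\
  (forall g x y, d (act g x) (act g y) = d x y).

(* Main.v *)
Require Import Defs.
From HB Require Import structures.
From mathcomp Require Import all_boot all_order all_algebra.
From mathcomp Require Import all_classical all_reals.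
From mathcomp Require Import ereal measure.
Local Open Scope classical_set_scope.
Local Open Scope ring_scope.
Import Order.TTheory GRing.Theory Num.Theory.
Set Implicit Arguments. Unset Strict Implicit. Unset Printing Implicit Defensive.

Section Basic.
Context {R : realType} {X : Type} (d : X -> X -> R).

Lemma setC_neqT (h : set X) : h !=set0 -> ~` h != setT.
Proof.
case=> x hx; apply/eqP => E.
have : (~` h) x by rewrite E.
by [].
Qed.

Lemma setC_neq0 (h : set X) : h != setT -> ~` h !=set0.
Proof.
move=> hT; apply/set0P; apply: contra_neq hT => E.
by rewrite -(setCK h) E setC0.
Qed.

Lemma halfspaceC (h : set X) : halfspace d h -> halfspace d (~` h).
Proof.
case=> [h0 [hT [ch cch]]]; split; first exact: setC_neq0.
split; first exact: setC_neqT.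
by split => //; rewrite setCK.
Qed.

Lemma uf_dich (s : set (set X)) (h : set X) :
  ultrafilter d s -> halfspace d h -> s h \/ s (~` h).
Proof.
move=> [[sH sI] smax] hh.
have [sh|nsh] := pselect (s h); first by left.
right.
have [b [sb hb]] : exists b, s b /\ h `&` b = set0.
  apply: contrapT => nex.
  have PI : pairwise_intersecting d (s `|` [set h]).
    split.
      by move=> k [/sH //|->].
    move=> k l [sk|->] [sl|->].
    - exact: sI.
    - apply/set0P; apply/negP => /eqP kl; apply: nex; exists k; split => //.
      by rewrite setIC.
    - apply/set0P; apply/negP => /eqP kl; apply: nex; exists l; split => //.
    - by rewrite setIid; case: hh.
  have := smax _ PI (@subsetUl _ s [set h]).
  move=> E; apply: nsh; rewrite -E; by right.
have PI : pairwise_intersecting d (s `|` [set ~` h]).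
  have hC := halfspaceC hh.
  split.
    by move=> k [/sH //|->].
  have key : forall k, s k -> (k `&` ~` h) !=set0.
    move=> k sk; case: (sI _ _ sk sb) => x [kx bx]; exists x; split => //.
    move=> hx.
    have : (h `&` b) x by [].
    by rewrite hb.
  move=> k l [sk|->] [sl|->].
  - exact: sI.
  - exact: key.
  - by rewrite setIC; exact: key.
  - by rewrite setIid; case: hC.
have := smax _ PI (@subsetUl _ s [set ~` h]).
move=> E; rewrite -E; by right.
Qed.

Lemma convex_pb (phi : X -> X) (C : set X) :
  (forall x y, d (phi x) (phi y) = d x y) -> convex d C -> convex d (phi @^-1` C).
Proof.
move=> iso cC x y Cx Cy z zI.
apply: (cC _ _ Cx Cy).
by rewrite /mI /= !iso.
Qed.

Lemma halfspace_pb (phi psi : X -> X) (h : set X) :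
  cancel phi psi -> cancel psi phi -> (forall x y, d (phi x) (phi y) = d x y) ->
  halfspace d h -> halfspace d (phi @^-1` h).
Proof.
move=> c1 c2 iso [[y hy] [hT [ch cch]]].
split; first by exists (psi y); rewrite /= c2.
split.
  apply/eqP => E; have [z nz] := setC_neq0 hT.
  have : (phi @^-1` h) (psi z) by rewrite E.
  by rewrite /= c2.
split; first exact: convex_pb.
by rewrite preimage_setC; apply: convex_pb.
Qed.

Lemma halfspace_pbE (phi psi : X -> X) (h : set X) :
  cancel phi psi -> cancel psi phi -> (forall x y, d (phi x) (phi y) = d x y) ->
  halfspace d (phi @^-1` h) <-> halfspace d h.
Proof.
move=> c1 c2 iso; split; last exact: halfspace_pb.
have iso' : forall x y, d (psi x) (psi y) = d x y.
  by move=> x y; rewrite -iso !c2.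
move=> /(halfspace_pb c2 c1 iso').
suff -> : psi @^-1` (phi @^-1` h) = h by [].
by apply/seteqP; split => x /=; rewrite c2.
Qed.

Definition pbs (phi : X -> X) (h : set X) : set X := phi @^-1` h.

Lemma image_hsE (phi psi : X -> X) (E : set (set X)) :
  cancel phi psi -> cancel psi phi ->
  image_hs phi E = pbs phi @^-1` E.
Proof.
move=> c1 c2; apply/seteqP; split => h /=.
  case=> h0 Eh0 <-.
  suff -> : pbs phi (phi @` h0) = h0 by [].
  apply/seteqP; split => x /=.
    by case=> y h0y /(can_inj c1) <-.
  by move=> hx; exists x.
move=> Eh; exists (pbs phi h) => //.
apply/seteqP; split => x /=.
  by case=> y hy <-.
by move=> hx; exists (psi x) => /=; rewrite /pbs /= c2.
Qed.

Lemma pbs_Hxy (phi psi : X -> X) x y :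
  cancel phi psi -> cancel psi phi -> (forall x y, d (phi x) (phi y) = d x y) ->
  pbs phi @^-1` (Hxy d x y) = Hxy d (phi x) (phi y).
Proof.
move=> c1 c2 iso; apply/seteqP; split => h /=;
  rewrite /Hxy /sigma_pt /setD /= (halfspace_pbE _ c1 c2 iso) //.
Qed.


Lemma Hxy_meas x y : measurable (Hxy d x y : set (HB d)).
Proof. by apply: sub_sigma_algebra; exists x, y. Qed.

Lemma measurable_pbs (phi psi : X -> X) (E : set (HB d)) :
  cancel phi psi -> cancel psi phi -> (forall x y, d (phi x) (phi y) = d x y) ->
  measurable E -> measurable (pbs phi @^-1` E : set (HB d)).
Proof.
move=> c1 c2 iso mE.
have mf : measurable_fun (setT : set (HB d)) (pbs phi : HB d -> HB d).
  apply: (@measurability _ _ (HB d) (HB d) setT (pbs phi) (Hgen d)) => //.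
  move=> A [B [x [y ->]] <-].
  rewrite setTI (@pbs_Hxy phi psi x y c1 c2 iso).
  exact: Hxy_meas.
by have := mf measurableT E mE; rewrite setTI.
Qed.

Lemma sigma_Hxy (a b x m : X) :
  mI d a b m -> mI d b x m -> mI d x a m ->
  sigma_pt d x `&` Hxy d a b = Hxy d a m.
Proof.
move=> m1 m2 m3; apply/seteqP; split => h /=.
  case=> [[hh hx] [[_ hb] nha]]; split; first split => //.
    by case: hh => _ [_ [ch _]]; apply: (ch b x).
  by [].
case=> [[hh hm] nha].
have ha : ~ h a by move=> ha; apply: nha.
have hx : h x.
  apply: contrapT => nhx; case: hh => _ [_ [_ cch]].
  by have := cch x a nhx ha m m3.
have hb : h b.
  apply: contrapT => nhb; case: hh => _ [_ [_ cch]].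
  by have := cch a b ha nhb m m1.
by split => //; split => //; split.
Qed.

Lemma sigma_Hxy_meas (x a b : X) : is_median_space d ->
  measurable (sigma_pt d x `&` Hxy d a b : set (HB d)).
Proof.
case=> _ med; have [m [[m1 [m2 m3]] _]] := med a b x.
rewrite (sigma_Hxy m1 m2 m3); exact: Hxy_meas.
Qed.

Lemma symdiff_meas (A B : set (HB d)) : measurable A -> measurable B ->
  measurable (symdiff A B : set (HB d)).
Proof. by move=> mA mB; apply: measurableU; apply: measurableD. Qed.

Lemma rp_Hxy_meas (s : set (set X)) a b : is_median_space d ->
  roller_point d s -> measurable (s `&` Hxy d a b : set (HB d)).
Proof.
move=> md [_ [x bh]].
have -> : s `&` Hxy d a b =
   symdiff (symdiff s (sigma_pt d x) `&` Hxy d a b) (sigma_pt d x `&` Hxy d a b).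
  apply/seteqP; split => h /=; rewrite /symdiff /setD /=;
  have [sh|nsh] := pselect (s h); have [xh|nxh] := pselect (sigma_pt d x h);
  tauto.
apply: symdiff_meas; first exact: bh.
exact: sigma_Hxy_meas.
Qed.


Definition ufl (A : set (set X)) :=
  (forall h l, A h -> A l -> h `&` l !=set0) /\
  (forall h, halfspace d h -> A h \/ A (~` h)).

Lemma ufl_C A h : ufl A -> halfspace d h -> (A (~` h) <-> ~ A h).
Proof.
move=> [PI dich] hh; split.
  move=> Ach Ah; have [x [hx chx]] := PI _ _ Ah Ach; exact: chx.
by move=> nAh; case: (dich _ hh).
Qed.

Lemma quad_same A A' h l : ufl A -> ufl A' -> halfspace d h -> halfspace d l ->
  (A h <-> ~ A' h) -> (A l <-> ~ A' l) -> (A h <-> A l) ->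
  h `&` l !=set0 /\ ~` h `&` ~` l !=set0.
Proof.
move=> uA uA' hh hl gh gl hl_.
have [Ah|nAh] := pselect (A h).
  have Al : A l by apply/hl_.
  split; first exact: uA.1.
  apply: uA'.1.
    by apply/(ufl_C uA' hh); apply/gh.
  by apply/(ufl_C uA' hl); apply/gl.
have nAl : ~ A l by move=> /hl_.
split; last by apply: uA.1; apply/(ufl_C uA).
apply: uA'.1.
  by apply: contrapT => nA'h; apply: nAh; apply/gh.
by apply: contrapT => nA'l; apply: nAl; apply/gl.
Qed.

Lemma quad_diff A A' h l : ufl A -> ufl A' -> halfspace d h -> halfspace d l ->
  (A h <-> ~ A' h) -> (A l <-> ~ A' l) -> ~ (A h <-> A l) ->
  h `&` ~` l !=set0 /\ ~` h `&` l !=set0.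
Proof.
move=> uA uA' hh hl gh gl nhl.
have hcl := halfspaceC hl.
have := @quad_same A A' h (~` l) uA uA' hh hcl gh.
rewrite setCK; apply.
  rewrite (ufl_C uA hl) (ufl_C uA' hl); split => H1 H2.
    by apply: H1; apply/gl.
  by apply: H1; apply/gl.
split => H.
  by apply/(ufl_C uA hl) => Al; apply: nhl; split.
by apply: contrapT => nAh; apply: nhl; split => [Ah|Al]; [exfalso; exact: nAh Ah | exfalso; exact: (ufl_C uA hl).1 H Al].
Qed.


Lemma core (N k : nat) (U U' : nat -> set (set X)) :
  (forall m (f : 'I_m -> set X), (forall i, halfspace d (f i)) ->
      (forall i j, i != j -> transverse (f i) (f j)) -> (m <= N)%N) ->
  (forall i, (i < k)%N -> ufl (U i) /\ ufl (U' i)) ->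
  (forall i j, (i < k)%N -> (j < k)%N -> i != j -> exists h, halfspace d h /\
      ~ (U i h <-> U j h) /\ forall l, (l < k)%N -> (U l h <-> ~ U' l h)) ->
  (k <= 2 ^ N)%N.
Proof.
case: k => [|k] // frank ufls sep.
pose K := k.+1.
pose good h := forall l, (l < K)%N -> (U l h <-> ~ U' l h).
have : forall p : 'I_K * 'I_K, exists h, p.1 != p.2 ->
    halfspace d h /\ ~ (U p.1 h <-> U p.2 h) /\ good h.
  move=> [i j] /=; have [ij|nij] := eqVneq i j.
    by exists setT => /negP.
  have [h Hh] := sep i j (ltn_ord i) (ltn_ord j) nij.
  by exists h.
case/choice => hs0 Hhs0.
pose hs (i j : 'I_K) := hs0 (i, j).
have Hhs : forall i j : 'I_K, i != j ->
    halfspace d (hs i j) /\ ~ (U i (hs i j) <-> U j (hs i j)) /\ good (hs i j).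
  by move=> i j nij; exact: (Hhs0 (i, j) nij).
pose v h := [ffun l : 'I_K => `[< U l h >]].
pose cv h := if v h ord0 then v h else [ffun l => ~~ v h l].
have vE : forall h (l : 'I_K), v h l = `[< U l h >] by move=> h l; rewrite ffunE.
have cv_neq : forall h l, halfspace d h -> halfspace d l -> good h -> good l ->
    cv h != cv l -> transverse h l.
  move=> h l hh hl gh gl ne.
  have [i Hi] : exists i, v h i != v l i.
    apply: contrapT => H; move/negP: ne; apply; apply/eqP; rewrite /cv.
    have -> : v h = v l.
      apply/ffunP => i; apply: contrapT => /eqP Hn; apply: H; by exists i.
    by [].
  have [j Hj] : exists j, v h j == v l j.
    apply: contrapT => H; move/negP: ne; apply; apply/eqP.
    have E : v h = [ffun l' => ~~ v l l'].
      apply/ffunP => j; apply: contrapT => Hn; apply: H; exists j.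
      by move: Hn; rewrite [X in _ <> X]ffunE; case: (v h j); case: (v l j) => /=; rewrite ?eqxx //=; apply: contrapT.
    rewrite /cv E ffunE; case: (v l ord0) => /=.
      by apply/ffunP => j; rewrite !ffunE negbK.
    by [].
  have [uA uA'] := ufls i (ltn_ord i).
  have [uB uB'] := ufls j (ltn_ord j).
  have Hi' : ~ (U i h <-> U i l).
    move=> E; move/negP: Hi; apply; rewrite !vE; apply/eqP; exact: asbool_equiv_eq.
  have Hj' : U j h <-> U j l.
    move/eqP: Hj; rewrite !vE => E; split => H.
      by apply/asboolP; rewrite -E; apply/asboolP.
    by apply/asboolP; rewrite E; apply/asboolP.
  have [q1 q4] := quad_same uB uB' hh hl (gh j (ltn_ord j)) (gl j (ltn_ord j)) Hj'.
  have [q2 q3] := quad_diff uA uA' hh hl (gh i (ltn_ord i)) (gl i (ltn_ord i)) Hi'.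
  by split => //; split => //; split.
pose offd := [set p : 'I_K * 'I_K | p.1 != p.2]%SET.
pose C := [set cv (hs p.1 p.2) | p in offd]%SET.
have : forall c, exists p : 'I_K * 'I_K, c \in C -> p.1 != p.2 /\ cv (hs p.1 p.2) = c.
  move=> c; have [cC|ncC] := boolP (c \in C); last by exists (ord0, ord0).
  move/imsetP: cC => [p]; rewrite inE => pd ->; by exists p.
case/choice => rep Hrep.
have CN : (#|C| <= N)%N.
  pose f (i : 'I_#|C|) := hs (rep (enum_val i)).1 (rep (enum_val i)).2.
  apply: (frank _ f).
    move=> i; have [pd _] := Hrep _ (enum_valP i); exact: (Hhs _ _ pd).1.
  move=> i j nij.
  have [pdi cvi] := Hrep _ (enum_valP i).
  have [pdj cvj] := Hrep _ (enum_valP j).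
  have [hi [_ gi]] := Hhs _ _ pdi.
  have [hj [_ gj]] := Hhs _ _ pdj.
  apply: cv_neq => //.
  rewrite /f cvi cvj; apply: contra nij => /eqP E; apply/eqP; exact: enum_val_inj.
pose F (i : 'I_K) := [set c in C | c i]%SET.
have Finj : injective F.
  move=> i j Fij; apply/eqP; apply: contrapT => /negP nij.
  have [hh [sp _]] := Hhs _ _ nij.
  have cC : cv (hs i j) \in C by apply/imsetP; exists (i, j); rewrite // inE.
  have : (cv (hs i j) \in F i) = (cv (hs i j) \in F j) by rewrite Fij.
  rewrite !inE cC /= /cv.
  have Ei : v (hs i j) i != v (hs i j) j.
    apply/negP => /eqP E; apply: sp; rewrite !vE in E; split => H.
      by apply/asboolP; rewrite -E; apply/asboolP.
    by apply/asboolP; rewrite E; apply/asboolP.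
  have key : forall w : {ffun 'I_K -> bool}, w i != w j ->
      (if w ord0 then w else [ffun l => ~~ w l]) i !=
      (if w ord0 then w else [ffun l => ~~ w l]) j.
    by move=> w; case: (w ord0); rewrite ?ffunE //; case: (w i); case: (w j).
  by move=> E; move: (key _ Ei); rewrite E eqxx.
have : (K <= 2 ^ #|C|)%N.
  rewrite -card_powerset -[X in (X <= _)%N]card_ord -(card_imset _ Finj).
  apply: subset_leq_card; apply/fintype.subsetP => S /imsetP [i _ ->].
  rewrite powersetE; apply/fintype.subsetP => c; rewrite inE => /andP [] //.
move=> /leq_trans; apply.
by rewrite leq_exp2l.
Qed.


Lemma ufl_pb (phi psi : X -> X) (A : set (set X)) :
  cancel phi psi -> cancel psi phi -> (forall x y, d (phi x) (phi y) = d x y) ->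
  ultrafilter d A -> ufl (pbs phi @^-1` A).
Proof.
move=> c1 c2 iso uA; split.
  move=> h l Ah Al; have [x [hx lx]] := uA.1.2 _ _ Ah Al.
  by exists (phi x).
move=> h hh; have hp := halfspace_pb c1 c2 iso hh.
case: (uf_dich uA hp) => H; [left|right] => //.
Qed.

End Basic.

Section Meas.
Context {R : realType} {X : Type} (d : X -> X -> R)
  (nu : {measure set (HB d) -> \bar R}).

Lemma null_U (A B : set (HB d)) : measurable A -> measurable B ->
  nu A = 0%E -> nu B = 0%E -> nu (A `|` B) = 0%E.
Proof.
move=> mA mB nA nB; apply/eqP; rewrite eq_le measure_ge0 andbT.
apply: (le_trans (measureU2 nu mA mB)).
have -> : (nu A + nu B = 0)%E by rewrite nA nB adde0.
by [].
Qed.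

Lemma pick_good n (F : nat -> set (HB d)) (S : set (HB d)) :
  measurable S -> nu S != 0%E ->
  (forall i, (i < n)%N -> measurable (F i) /\ nu (F i) = 0%E) ->
  exists h, S h /\ forall i, (i < n)%N -> ~ F i h.
Proof.
elim: n S => [|n IH] S mS nS HF.
  apply: contrapT => H; move/negP: nS; apply; apply/eqP.
  suff -> : S = set0 by rewrite measure0.
  by apply/seteqP; split => // h Sh; apply: H; exists h.
have [mF nF] := HF n (ltnSn n).
have mS' : measurable (S `\` F n) by apply: measurableD.
have nS' : nu (S `\` F n) != 0%E.
  apply/negP => /eqP n0; move/negP: nS; apply; apply/eqP.
  apply/eqP; rewrite eq_le measure_ge0 andbT.
  have : (nu S <= nu ((S `\` F n) `|` F n))%E.
    apply: le_measure; rewrite ?inE //; first exact: measurableU.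
    by move=> h Sh; have [Fh|nFh] := pselect (F n h); [right|left].
  move=> /le_trans; apply.
  by rewrite (null_U mS' mF n0 nF).
have [h [[Sh nFh] Hh]] := IH _ mS' nS' (fun i ilt => HF i (ltnW ilt)).
exists h; split => // i; rewrite ltnS leq_eqVlt => /orP [/eqP -> //|ilt].
exact: Hh.
Qed.

Lemma roller_eq_sym (s t : set (set X)) : roller_eq nu s t -> roller_eq nu t s.
Proof. by rewrite /roller_eq /symdiff setUC. Qed.

End Meas.

Section Main.
Context {R : realType} {X : Type} (d : X -> X -> R)
  (nu : {measure set (HB d) -> \bar R}).

Lemma lineal_nulls (xi eta : set (set X)) a b : is_median_space d ->
  roller_point d xi -> roller_point d eta ->
  (forall x, roller_interval nu xi eta (sigma_pt d x)) ->
  [/\ measurable (xi `&` eta `&` Hxy d a b : set (HB d)),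
      nu (xi `&` eta `&` Hxy d a b) = 0%E,
      measurable (Hxy d a b `\` (xi `|` eta) : set (HB d)) &
      nu (Hxy d a b `\` (xi `|` eta)) = 0%E].
Proof.
move=> md rxi reta lin.
have mxi := rp_Hxy_meas a b md rxi.
have meta := rp_Hxy_meas a b md reta.
split.
- have -> : xi `&` eta `&` Hxy d a b = (xi `&` Hxy d a b) `&` (eta `&` Hxy d a b).
    apply/seteqP; split => h /=; tauto.
  exact: measurableI.
- have [_ ra] := lin a.
  have := ra a b.
  have -> : symdiff (median3 xi eta (sigma_pt d a)) (sigma_pt d a) `&` Hxy d a b =
            xi `&` eta `&` Hxy d a b.
    apply/seteqP; split => h /=; rewrite /symdiff /median3 /Hxy /setD /setI /setU /=;
    have [p1|p1] := pselect (xi h); have [p2|p2] := pselect (eta h);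
    have [p3|p3] := pselect (sigma_pt d a h); tauto.
  by [].
- have -> : Hxy d a b `\` (xi `|` eta) =
            Hxy d a b `\` ((xi `&` Hxy d a b) `|` (eta `&` Hxy d a b)).
    apply/seteqP; split => h /=; rewrite /setD /setI /setU /=; tauto.
  apply: measurableD; first exact: Hxy_meas.
  exact: measurableU.
- have [_ rb] := lin b.
  have := rb a b.
  have -> : symdiff (median3 xi eta (sigma_pt d b)) (sigma_pt d b) `&` Hxy d a b =
            Hxy d a b `\` (xi `|` eta).
    apply/seteqP; split => h /=; rewrite /symdiff /median3 /Hxy /setD /setI /setU /=;
    have [p1|p1] := pselect (xi h); have [p2|p2] := pselect (eta h);
    have [p3|p3] := pselect (sigma_pt d b h); tauto.
  by [].
Qed.

Lemma transport (phi psi : X -> X) (E : set (HB d)) :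
  cancel phi psi -> cancel psi phi -> (forall x y, d (phi x) (phi y) = d x y) ->
  canonical_measure nu -> measurable E ->
  measurable (pbs phi @^-1` E : set (HB d)) /\ nu (pbs phi @^-1` E) = nu E.
Proof.
move=> c1 c2 iso [_ cmI] mE; split; first exact: (measurable_pbs c1 c2 iso).
rewrite -(image_hsE _ c1 c2); apply: cmI => //.
split => //; exact: (Bijective c1 c2).
Qed.

End Main.

Theorem lemma6p1 (R : realType) (X : Type) (d : X -> X -> R)
  (nu : {measure set (HB d) -> \bar R}) :
  is_median_space d -> complete_metric d -> finite_rank d ->
  canonical_measure nu -> lineal nu ->
  forall (G : Type) (mul : G -> G -> G) (e : G) (inv : G -> G) (act : G -> X -> X),
    is_group mul e inv -> isometric_action d mul e act ->
    roller_elementary nu act.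
Proof.
move=> md _ [N frank] cm [xi [eta [rxi [reta lin]]]] G mul e inv act
  [gA [gI gV]] [ae [am ai]].
have c1 : forall g, cancel (act g) (act (inv g)).
  by move=> g x; rewrite -am gV ae.
have c2 : forall g, cancel (act (inv g)) (act g).
  by move=> g x; apply: (can_inj (c1 (inv g))); rewrite c1.
have iso : forall g x y, d (act g x) (act g y) = d x y := ai.
pose Z g := pbs (act g) @^-1` xi.
pose Z' g := pbs (act g) @^-1` eta.
have uZ : forall g, ufl d (Z g) := fun g => ufl_pb (c1 g) (c2 g) (iso g) rxi.1.
have uZ' : forall g, ufl d (Z' g) := fun g => ufl_pb (c1 g) (c2 g) (iso g) reta.1.
have PH : forall g a b, pbs (act g) @^-1` (Hxy d (act (inv g) a) (act (inv g) b))
    = Hxy d a b.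
  by move=> g a b; rewrite (@pbs_Hxy _ _ d _ _ _ _ (c1 g) (c2 g) (iso g)) !c2.
have PHx : forall g a b h,
    Hxy d (act (inv g) a) (act (inv g) b) (pbs (act g) h) <-> Hxy d a b h.
  by move=> g a b h; rewrite -(PH g a b).
have ZH : forall g a b, measurable (Z g `&` Hxy d a b : set (HB d)).
  move=> g a b.
  have -> : Z g `&` Hxy d a b =
      pbs (act g) @^-1` (xi `&` Hxy d (act (inv g) a) (act (inv g) b)).
    apply/seteqP; split => h /=.
      by case=> z1 z2; split; [exact: z1 | apply/(PHx g)].
    by case=> z1 z2; split; [exact: z1 | apply/(PHx g)].
  have mE := rp_Hxy_meas (act (inv g) a) (act (inv g) b) md rxi.
  exact: (transport (c1 g) (c2 g) (iso g) cm mE).1.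
pose bad g a b := (Z g `&` Z' g `&` Hxy d a b) `|` (Hxy d a b `\` (Z g `|` Z' g)).
have nullF : forall g a b, measurable (bad g a b : set (HB d)) /\ nu (bad g a b) = 0%E.
  move=> g a b.
  have E1 : Z g `&` Z' g `&` Hxy d a b =
      pbs (act g) @^-1` (xi `&` eta `&` Hxy d (act (inv g) a) (act (inv g) b)).
    apply/seteqP; split => h /=.
      by case=> [[z1 z2] z3]; split; [split; [exact: z1|exact: z2]|apply/(PHx g)].
    by case=> [[z1 z2] z3]; split; [split; [exact: z1|exact: z2]|apply/(PHx g)].
  have E2 : Hxy d a b `\` (Z g `|` Z' g) =
      pbs (act g) @^-1` (Hxy d (act (inv g) a) (act (inv g) b) `\` (xi `|` eta)).
    apply/seteqP; split => h /=.
      by case=> z1 z2; split; [apply/(PHx g) | exact: z2].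
    by case=> z1 z2; split; [apply/(PHx g) | exact: z2].
  have [m1 n1 m2 n2] := lineal_nulls (act (inv g) a) (act (inv g) b) md rxi reta lin.
  have [mm1 nn1] := transport (c1 g) (c2 g) (iso g) cm m1.
  have [mm2 nn2] := transport (c1 g) (c2 g) (iso g) cm m2.
  rewrite /bad E1 E2; split; first exact: measurableU.
  by apply: null_U => //; rewrite ?nn1 ?nn2.
have bound : forall s : seq G, (forall i j, (i < size s)%N -> (j < size s)%N -> i != j ->
    ~ roller_eq nu (Z (nth e s i)) (Z (nth e s j))) -> (size s <= 2 ^ N)%N.
  move=> s Hs.
  apply: (@core _ _ d N (size s) (fun i => Z (nth e s i)) (fun i => Z' (nth e s i)) frank).
    by move=> i _; split; [exact: uZ | exact: uZ'].
  move=> i j ilt jlt nij.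
  have nre := Hs i j ilt jlt nij.
  set gi := nth e s i; set gj := nth e s j.
  have [a [b nab]] : exists a b, nu (symdiff (Z gi) (Z gj) `&` Hxy d a b) != 0%E.
    apply: contrapT => H; apply: nre => a b; apply/eqP; apply: contrapT => H2.
    by apply: H; exists a, b; apply/negP.
  have Esp : symdiff (Z gi) (Z gj) `&` Hxy d a b =
      ((Z gi `&` Hxy d a b) `\` (Z gj `&` Hxy d a b)) `|`
      ((Z gj `&` Hxy d a b) `\` (Z gi `&` Hxy d a b)).
    apply/seteqP; split => h /=; rewrite /symdiff /setD /setI /setU /=;
    have [p1|p1] := pselect (Z gi h); have [p2|p2] := pselect (Z gj h);
    have [p3|p3] := pselect (Hxy d a b h); tauto.
  have mA : measurable ((Z gi `&` Hxy d a b) `\` (Z gj `&` Hxy d a b) : set (HB d)).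
    by apply: measurableD.
  have mB : measurable ((Z gj `&` Hxy d a b) `\` (Z gi `&` Hxy d a b) : set (HB d)).
    by apply: measurableD.
  pose F (l : nat) : set (HB d) := bad (nth e s l) a b.
  have HF : forall l, (l < size s)%N -> measurable (F l) /\ nu (F l) = 0%E.
    by move=> l _; exact: nullF.
  have goodof : forall h, Hxy d a b h -> (forall l, (l < size s)%N -> ~ F l h) ->
      forall l, (l < size s)%N -> (Z (nth e s l) h <-> ~ Z' (nth e s l) h).
    move=> h Hh Hg l llt; have := Hg l llt; rewrite /F /bad /setD /setI /setU /=.
    have [p1|p1] := pselect (Z (nth e s l) h);
    have [p2|p2] := pselect (Z' (nth e s l) h); tauto.
  have [nA|nA] := boolP (nu ((Z gi `&` Hxy d a b) `\` (Z gj `&` Hxy d a b)) == 0%E).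
    have nB : nu ((Z gj `&` Hxy d a b) `\` (Z gi `&` Hxy d a b)) != 0%E.
      apply/negP => /eqP nB; move/negP: nab; apply; apply/eqP.
      by rewrite Esp; apply: null_U => //; apply/eqP.
    have [h [[[Zj Hh] nZi] Hg]] := pick_good mB nB HF.
    exists h; split; first by case: Hh => [[]].
    split; last exact: goodof.
    by move=> E; apply: nZi; split => //; apply/E.
  have [h [[[Zi Hh] nZj] Hg]] := pick_good mA nA HF.
  exists h; split; first by case: Hh => [[]].
  split; last exact: goodof.
  by move=> E; apply: nZj; split => //; apply/E.
pose P n := exists s : seq G, size s = n /\ (forall i j, (i < size s)%N ->
    (j < size s)%N -> i != j -> ~ roller_eq nu (Z (nth e s i)) (Z (nth e s j))).
have P0 : exists n, `[< P n >] by exists 0%N; apply/asboolP; exists [::].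
have Pub : forall n, `[< P n >] -> (n <= 2 ^ N)%N.
  by move=> n /asboolP [s [<- Hs]]; exact: bound.
case: (ex_maxnP P0 Pub) => n /asboolP [s [sz Hs]] maxn.
exists xi; split => //; exists (map Z s) => g.
rewrite (image_hsE _ (c1 g) (c2 g)).
apply: contrapT => H.
have Hg : forall j, (j < size s)%N -> ~ roller_eq nu (Z g) (Z (nth e s j)).
  move=> j jlt re; apply: H; exists (Z (nth e s j)) => //.
  have -> : Z (nth e s j) = nth (Z e) (map Z s) j by rewrite (nth_map e).
  by apply: mem_nth; rewrite size_map.
have : `[< P n.+1 >].
  apply/asboolP; exists (g :: s); split; first by rewrite /= sz.
  move=> [|i] [|j] //= ilt jlt nij.
  - exact: Hg.
  - by move=> re; apply: (Hg i ilt); exact: roller_eq_sym.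
  - exact: Hs.
by move/maxn; rewrite ltnn.
Qed.
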